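(* Let $L$ be a $\kappa$-frame. The following are equivalent: (1) $L$ is d-reduced; (2) the map $g\colon L\to \mathfrak{H}_\kappa L/\mathfrak{D}_{\mathfrak{H}_\kappa L}$, $a\mapsto[\downarrow a]$ (the composite of $a\mapsto\downarrow a$ with the quotient map) is injective; (3) $L$ is isomorphic to a sub-$\kappa$-frame of some Boolean frame $B$ (a subset closed under finite meets and joins of subsets of cardinality $<\kappa$ computed in $B$) which generates $B$ under arbitrary joins.
   Context: $\kappa$ is a fixed regular cardinal; a $\kappa$-frame is a bounded distributive lattice having joins of all subsets of cardinality $<\kappa$ and satisfying the frame distributive law for such joins; a frame is a complete lattice satisfying the infinite distributive law, and a Boolean frame is a complete Boolean algebra. A $\kappa$-ideal is a downset in which every subset of cardinality $<\kappa$ has an upper bound; $\mathfrak{H}_\kappa L$ is the frame of $\kappa$-ideals under inclusion; $\downarrow a=\{x\mid x\le a\}$. For a $\kappa$-frame (or frame) $M$, $\mathfrak{D}_M=\{(a,b)\mid\forall x\in M:\ a\wedge x=0\iff b\wedge x=0\}$, a congruence (equivalence relation that is a sub-$\kappa$-frame, resp. subframe, of $M\times M$); $M/\mathfrak{D}_M$ is the quotient. $M$ is d-reduced if $\mathfrak{D}_M$ is the diagonal. *)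

(* Defs.v *)
From Stdlib Require Import Classical.
Set Implicit Arguments.

Definition injective_fun {A B : Type} (f : A -> B) := forall x y, f x = f y -> x = y.

Definition lt_card (A K : Type) : Prop :=
  (exists f : A -> K, injective_fun f) /\ ~ (exists g : K -> A, injective_fun g).

(* kappa = |K| is an (infinite) regular cardinal *)
Definition regular_card (K : Type) : Prop :=
  (exists f : nat -> K, injective_fun f) /\
  (forall (I : Type) (A : I -> Type),
      lt_card I K -> (forall i, lt_card (A i) K) -> lt_card {i : I & A i} K).

Definition small (K : Type) {X : Type} (S : X -> Prop) : Prop := lt_card {x : X | S x} K.

Definition is_ub {X : Type} (le : X -> X -> Prop) (S : X -> Prop) (x : X) :=
  forall s, S s -> le s x.
Definition is_lub {X : Type} (le : X -> X -> Prop) (S : X -> Prop) (x : X) :=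
  is_ub le S x /\ forall y, is_ub le S y -> le x y.

Record KFrame (K : Type) := {
  kcar :> Type;
  kle : kcar -> kcar -> Prop;
  kle_refl : forall a, kle a a;
  kle_trans : forall a b c, kle a b -> kle b c -> kle a c;
  kle_antisym : forall a b, kle a b -> kle b a -> a = b;
  kmeet : kcar -> kcar -> kcar;
  kmeet_glb : forall a b c, kle c (kmeet a b) <-> (kle c a /\ kle c b);
  ktop : kcar;
  ktop_max : forall a, kle a ktop;
  kbot : kcar;
  kbot_min : forall a, kle kbot a;
  kjoin_ex : forall S : kcar -> Prop, small K S -> exists x, is_lub kle S x;
  kdistr : forall (a : kcar) (S : kcar -> Prop) (x : kcar), small K S -> is_lub kle S x ->
      is_lub kle (fun y => exists s, S s /\ y = kmeet a s) (kmeet a x)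
}.

Section KF.
Variables (K : Type) (L : KFrame K).

Definition Drel (a b : L) : Prop :=
  forall x : L, kmeet L a x = kbot L <-> kmeet L b x = kbot L.
Definition d_reduced : Prop := forall a b : L, Drel a b -> a = b.

Definition is_kideal (I : L -> Prop) : Prop :=
  (forall a b, kle L a b -> I b -> I a) /\
  (forall S : L -> Prop, small K S -> (forall s, S s -> I s) -> exists u, I u /\ is_ub (kle L) S u).

Definition down (a : L) : L -> Prop := fun x => kle L x a.

(* set equality of subsets of L (= equality of ideals as elements of H_kappa L) *)
Definition seteq (I J : L -> Prop) : Prop := forall x, I x <-> J x.

(* In the frame H_kappa L: meet is intersection, bottom is the ideal {0} = down 0.
   D_{H_kappa L}(I, J) <-> for every kappa-ideal X, I /\ X = 0 iff J /\ X = 0. *)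
Definition Drel_H (I J : L -> Prop) : Prop :=
  forall X : L -> Prop, is_kideal X ->
    (seteq (fun x => I x /\ X x) (down (kbot L)) <->
     seteq (fun x => J x /\ X x) (down (kbot L))).

(* g : a |-> [down a] in H_kappa L / D is injective: [down a] = [down b] means (down a, down b) in D *)
Definition g_injective : Prop := forall a b : L, Drel_H (down a) (down b) -> a = b.
End KF.

Record BFrame := {
  bcar :> Type;
  ble : bcar -> bcar -> Prop;
  ble_refl : forall a, ble a a;
  ble_trans : forall a b c, ble a b -> ble b c -> ble a c;
  ble_antisym : forall a b, ble a b -> ble b a -> a = b;
  bmeet : bcar -> bcar -> bcar;
  bmeet_glb : forall a b c, ble c (bmeet a b) <-> (ble c a /\ ble c b);
  btop : bcar;
  btop_max : forall a, ble a btop;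
  bbot : bcar;
  bbot_min : forall a, ble bbot a;
  bjoin : (bcar -> Prop) -> bcar;
  bjoin_lub : forall S, is_lub ble S (bjoin S);
  bdistr : forall a S, bmeet a (bjoin S) = bjoin (fun y => exists s, S s /\ y = bmeet a s);
  bcompl : forall a, exists c, bmeet a c = bbot /\ bjoin (fun y => y = a \/ y = c) = btop
}.

Definition sub_kframe (K : Type) (B : BFrame) (M : B -> Prop) : Prop :=
  M (btop B) /\
  (forall a b, M a -> M b -> M (bmeet B a b)) /\
  (forall S : B -> Prop, small K S -> (forall s, S s -> M s) -> M (bjoin B S)).

Definition join_generates (B : BFrame) (M : B -> Prop) : Prop :=
  forall b : B, exists S : B -> Prop, (forall s, S s -> M s) /\ b = bjoin B S.

Definition boolean_repr (K : Type) (L : KFrame K) : Prop :=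
  exists (B : BFrame) (M : B -> Prop) (f : L -> B),
    sub_kframe K B M /\ join_generates B M /\
    (forall a, M (f a)) /\ (forall y, M y -> exists a, f a = y) /\
    (forall a b, kle L a b <-> ble B (f a) (f b)).

(* Main.v *)
Require Import Defs.
From Stdlib Require Import Classical FunctionalExtensionality PropExtensionality ProofIrrelevance.

Section Lat.
Variables (K : Type) (L : KFrame K).
Local Notation le := (kle L).
Local Notation m := (kmeet L).
Local Notation z := (kbot L).

Lemma ml a b : le (m a b) a.
Proof. apply (proj1 (kmeet_glb L a b (m a b)) (kle_refl L _)). Qed.
Lemma mr a b : le (m a b) b.
Proof. apply (proj1 (kmeet_glb L a b (m a b)) (kle_refl L _)). Qed.
Lemma mi a b c : le c a -> le c b -> le c (m a b).
Proof. intros; apply (kmeet_glb L); auto. Qed.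

Ltac lat := solve [ apply kle_refl | apply mi; lat
  | eapply kle_trans; [apply ml | lat] | eapply kle_trans; [apply mr | lat] ].

Lemma mcomm a b : m a b = m b a.
Proof. apply kle_antisym; lat. Qed.
Lemma massoc a b c : m (m a b) c = m a (m b c).
Proof. apply kle_antisym; lat. Qed.
Lemma mle a b : le a b -> m a b = a.
Proof. intro H; apply kle_antisym. apply ml. apply mi; [apply kle_refl|exact H]. Qed.
Lemma mid a : m a a = a.
Proof. apply mle, kle_refl. Qed.
Lemma lez a : le a z -> a = z.
Proof. intro; apply kle_antisym; auto; apply kbot_min. Qed.
Lemma zle u v : le u v -> v = z -> u = z.
Proof. intros H E; subst; apply lez; auto. Qed.
Lemma mmono a a' b : le a a' -> le (m a b) (m a' b).
Proof. intro H; apply mi. eapply kle_trans; [apply ml|exact H]. apply mr. Qed.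
Lemma mmono_r a b b' : le b b' -> le (m a b) (m a b').
Proof. intro H; apply mi. apply ml. eapply kle_trans; [apply mr|exact H]. Qed.
Lemma mz a : m a z = z.
Proof. apply lez, mr. Qed.
Lemma zm a : m z a = z.
Proof. apply lez, ml. Qed.

Definition perp (X : L -> Prop) : L -> Prop := fun y => forall x, X x -> m y x = z.
Definition cl X := perp (perp X).

Lemma perp_anti (X Y : L -> Prop) : (forall x, X x -> Y x) -> forall y, perp Y y -> perp X y.
Proof. unfold perp; auto. Qed.
Lemma cl_ext X x : X x -> cl X x.
Proof. intros Hx y Hy; rewrite mcomm; apply Hy; auto. Qed.
Lemma cl_mono (X Y : L -> Prop) : (forall x, X x -> Y x) -> forall y, cl X y -> cl Y y.
Proof. intros H; apply perp_anti, perp_anti, H. Qed.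
Lemma perp_cl X y : perp (cl X) y <-> perp X y.
Proof.
  split. apply perp_anti, cl_ext.
  intros Hy w Hw. rewrite mcomm; apply Hw; auto.
Qed.
Lemma cl_cl X x : cl (cl X) x <-> cl X x.
Proof.
  unfold cl at 1; split; apply perp_anti; intros; apply perp_cl; auto.
Qed.
Lemma cl_congr (X Y : L -> Prop) : (forall y, perp X y <-> perp Y y) -> forall x, cl X x <-> cl Y x.
Proof. intros E x; unfold cl, perp; split; intros H w Hw; apply H; apply E; auto. Qed.
Lemma perp_down X y y' : le y' y -> perp X y -> perp X y'.
Proof. intros H1 H2 x Hx. eapply zle; [apply mmono; exact H1| auto]. Qed.
Lemma perp_z X : perp X z.
Proof. intros x _; apply zm. Qed.
Lemma perp_single a y : perp (fun x => x = a) y <-> m y a = z.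
Proof. split; intro H. apply H; auto. intros x ->; auto. Qed.

Definition polar (P : L -> Prop) := forall x, cl P x -> P x.
Definition Bc := {P : L -> Prop | polar P}.
Lemma Bext (P Q : Bc) : (forall x, proj1_sig P x <-> proj1_sig Q x) -> P = Q.
Proof.
  destruct P as [P hP], Q as [Q hQ]; simpl; intro H.
  assert (P = Q) by (apply functional_extensionality; intro; apply propositional_extensionality; auto).
  subst; f_equal; apply proof_irrelevance.
Qed.
Lemma cl_polar X : polar (cl X).
Proof. intros x H; apply cl_cl; auto. Qed.
Definition mk X : Bc := exist _ (cl X) (cl_polar X).
Lemma pol_down (P : Bc) x y : le y x -> proj1_sig P x -> proj1_sig P y.
Proof.
  destruct P as [P hP]; simpl; intros H Hx. apply hP.
  eapply perp_down; [exact H|]. apply cl_ext; auto.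
Qed.
Lemma pol_z (P : Bc) : proj1_sig P z.
Proof. destruct P as [P hP]; apply hP, perp_z. Qed.

Definition Ble (P Q : Bc) := forall x, proj1_sig P x -> proj1_sig Q x.
Definition Bmeet (P Q : Bc) := mk (fun x => proj1_sig P x /\ proj1_sig Q x).
Lemma Bmeet_eq P Q x : proj1_sig (Bmeet P Q) x <-> proj1_sig P x /\ proj1_sig Q x.
Proof.
  split.
  - intro H; destruct P as [P hP], Q as [Q hQ]; simpl in *; split.
    + apply hP; revert H; apply cl_mono; tauto.
    + apply hQ; revert H; apply cl_mono; tauto.
  - intro H; apply (cl_ext (fun x => proj1_sig P x /\ proj1_sig Q x)); exact H.
Qed.
Definition Btop := mk (fun _ => True).
Definition Bbot := mk (fun _ => False).
Lemma Bbot_eq x : proj1_sig Bbot x <-> x = z.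
Proof.
  split.
  - intro H. rewrite <- (mid x). apply H. intros w [].
  - intros ->; apply perp_z.
Qed.
Definition Bjoin (S : Bc -> Prop) := mk (fun x => exists P, S P /\ proj1_sig P x).

Lemma Ble_refl a : Ble a a. Proof. intros x; auto. Qed.
Lemma Ble_trans a b c : Ble a b -> Ble b c -> Ble a c. Proof. unfold Ble; auto. Qed.
Lemma Ble_antisym a b : Ble a b -> Ble b a -> a = b.
Proof. intros; apply Bext; split; auto. Qed.
Lemma Bmeet_glb a b c : Ble c (Bmeet a b) <-> Ble c a /\ Ble c b.
Proof.
  unfold Ble; split.
  - intro H; split; intros x Hx; specialize (H x Hx); apply Bmeet_eq in H; tauto.
  - intros [H1 H2] x Hx; apply Bmeet_eq; auto.
Qed.
Lemma Btop_max a : Ble a Btop.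
Proof. intros x _; apply cl_ext; exact I. Qed.
Lemma Bbot_min a : Ble Bbot a.
Proof. intros x H; apply Bbot_eq in H; subst; apply pol_z. Qed.
Lemma Bjoin_lub S : is_lub Ble S (Bjoin S).
Proof.
  split.
  - intros s Hs x Hx; apply cl_ext; eauto.
  - intros y Hy x Hx. destruct y as [Y hY]; simpl in *. apply hY.
    revert Hx; apply cl_mono. intros w [P [HP Hw]]. apply (Hy P HP); auto.
Qed.
Lemma Bdistr a S : Bmeet a (Bjoin S) = Bjoin (fun y => exists s, S s /\ y = Bmeet a s).
Proof.
  apply Bext; intro x; rewrite Bmeet_eq; simpl. split.
  - intros [Ha Hj] y Hy.
    assert (E : perp (fun x => exists P, S P /\ proj1_sig P x) (m x y)).
    { intros w [P [HP Hw]].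
      assert (Hy' : m y (m x w) = z).
      { apply Hy. exists (Bmeet a P). split. eauto.
        apply Bmeet_eq. split. eapply pol_down; [apply ml|auto].
        eapply pol_down; [apply mr|auto]. }
      rewrite <- Hy'. apply kle_antisym; lat. }
    specialize (Hj _ E). rewrite <- massoc, mid in Hj. exact Hj.
  - intro H. split.
    + destruct a as [A hA]; simpl in *. apply hA. revert H; apply cl_mono.
      intros w [P [[s [_ ->]] Hw]]. apply Bmeet_eq in Hw. tauto.
    + revert H; apply cl_mono.
      intros w [P [[s [Hs ->]] Hw]]. apply Bmeet_eq in Hw. exists s; tauto.
Qed.
Lemma Bcompl a : exists c, Bmeet a c = Bbot /\ Bjoin (fun y => y = a \/ y = c) = Btop.
Proof.
  exists (mk (perp (proj1_sig a))). split.
  - apply Bext; intro x; rewrite Bmeet_eq, Bbot_eq; simpl. split.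
    + intros [Ha Hc]. apply (proj1 (perp_cl (proj1_sig a) x)) in Hc. rewrite <- (mid x). apply Hc; auto.
    + intros ->; split; [apply pol_z|apply perp_z].
  - apply Bext; intro x; simpl. split.
    + apply cl_mono; auto.
    + intros _ y Hy.
      assert (Hya : perp (proj1_sig a) y).
      { intros w Hw. apply Hy. exists a; auto. }
      assert (Hyy : m y y = z).
      { apply Hy. exists (mk (perp (proj1_sig a))). split; auto. simpl. apply cl_ext; auto. }
      rewrite mid in Hyy; subst; apply mz.
Qed.

Definition Bf : BFrame := Build_BFrame Ble_refl Ble_trans Ble_antisym Bmeet Bmeet_glb
  Btop_max Bbot_min Bjoin Bjoin_lub Bdistr Bcompl.

End Lat.

Lemma lt_card_inj (A B K : Type) (h : A -> B) : injective_fun h -> lt_card B K -> lt_card A K.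
Proof.
  intros Hh [[f Hf] Hn]. split.
  - exists (fun a => f (h a)). intros x y E; apply Hh, Hf, E.
  - intros [g Hg]; apply Hn. exists (fun k => h (g k)). intros x y E; apply Hg, Hh, E.
Qed.

Lemma small_empty (K X : Type) : regular_card K -> small K (fun _ : X => False).
Proof.
  intros [[f _] _]. split.
  - exists (fun p : {x : X | False} => match proj2_sig p with end). intros [x []].
  - intros [g _]. destruct (g (f 0)) as [x []].
Qed.

Section Main.
Variables (K : Type) (hK : regular_card K) (L : KFrame K).
Local Notation le := (kle L).
Local Notation m := (kmeet L).
Local Notation z := (kbot L).

Ltac lat := solve [ apply kle_refl | apply mi; lat
  | eapply kle_trans; [apply ml | lat] | eapply kle_trans; [apply mr | lat] ].

Lemma inter_zero a X : is_kideal L X ->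
  (seteq L (fun x => down L a x /\ X x) (down L z) <-> forall x, X x -> m a x = z).
Proof.
  intros [Hd Hu]. split.
  - intros H x Hx. apply lez. apply H. split. apply ml. eapply Hd; [apply mr|exact Hx].
  - intros H x. unfold down. split.
    + intros [Hxa Hx]. specialize (H x Hx). rewrite mcomm, mle in H by auto. subst; apply kle_refl.
    + intro Hx. apply lez in Hx. subst. split. apply kbot_min.
      destruct (Hu (fun _ => False) (small_empty K (kcar L) hK) (fun _ f => match f with end)) as [u [Hu' _]].
      eapply Hd; [apply kbot_min|exact Hu'].
Qed.

Lemma down_ideal a : is_kideal L (down L a).
Proof.
  split. intros x y H1 H2; eapply kle_trans; eauto.
  intros S _ HS. exists a. split. apply kle_refl. intros s Hs; apply HS; auto.
Qed.

Lemma d_to_g : d_reduced L -> g_injective L.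
Proof.
  intros D a b H. apply D. intro x.
  specialize (H _ (down_ideal x)). rewrite !inter_zero in H by apply down_ideal.
  split; intro E.
  - apply H. 2: apply kle_refl. intros y Hy. eapply zle; [apply mmono_r; exact Hy|exact E].
  - apply H. 2: apply kle_refl. intros y Hy. eapply zle; [apply mmono_r; exact Hy|exact E].
Qed.

Lemma g_to_d : g_injective L -> d_reduced L.
Proof.
  intros G a b H. apply G. intros X HX. rewrite !inter_zero by exact HX.
  split; intros E x Hx; apply H; auto.
Qed.

Definition F (a : L) : Bc K L := mk K L (fun x => x = a).

Lemma perpF a y : perp K L (proj1_sig (F a)) y <-> m y a = z.
Proof. simpl. rewrite perp_cl. apply perp_single. Qed.

Local Notation BC := (Bc K L).
Local Notation Perp := (perp K L).
Local Notation Cl := (cl K L).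
Local Notation BLE := (Ble K L).

Lemma F_order (D : d_reduced L) a b : le a b <-> BLE (F a) (F b).
Proof.
  split.
  - intros H x Hx; simpl in *.
    apply (perp_anti K L (Perp (fun x => x = b)) (Perp (fun x => x = a))); [|exact Hx].
    intros y Hy. apply perp_single in Hy; apply perp_single.
    eapply zle; [apply mmono_r; exact H| exact Hy].
  - intro H.
    assert (Hp : forall y, m y b = z -> m y a = z).
    { intros y Hy. apply perpF. apply perpF in Hy. exact (perp_anti K L _ _ H y Hy). }
    assert (E : m a b = a).
    { apply D. intro x. split; intro E.
      - assert (E2 : m (m a x) b = z).
        { rewrite <- E. apply kle_antisym; lat. }
        apply Hp in E2. rewrite <- E2. apply kle_antisym; lat.
      - eapply zle; [apply mmono, ml| exact E]. }
    rewrite <- E; apply mr.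
Qed.

Lemma F_inj (D : d_reduced L) a b : F a = F b -> a = b.
Proof.
  intro E. apply kle_antisym; apply (F_order D); rewrite E; apply Ble_refl.
Qed.

Lemma d_to_bool : d_reduced L -> boolean_repr L.
Proof.
  intro D. exists (Bf K L). exists (fun P => exists a, F a = P). exists F.
  split; [|split; [|split; [|split]]].
  - split; [|split].
    + exists (ktop L). apply Bext. intro x; simpl. split.
      * apply cl_mono; auto.
      * intros _ y Hy. apply perp_single in Hy.
        rewrite mle in Hy by apply ktop_max. subst; apply mz.
    + intros P Q [a <-] [b <-]. exists (m a b). apply Bext. intro x.
      change (proj1_sig (F (m a b)) x <-> proj1_sig (Bmeet K L (F a) (F b)) x).
      rewrite Bmeet_eq. simpl. split.
      * intro H. split; revert H; apply (perp_anti K L); intros y Hy;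
          apply perp_single in Hy; apply perp_single; eapply zle; try exact Hy; apply mmono_r; lat.
      * intros [Ha Hb] y Hy. apply perp_single in Hy.
        assert (H1 : m x (m y b) = z).
        { apply Ha. apply perp_single. rewrite <- Hy. apply kle_antisym; lat. }
        assert (H2 : m x (m x y) = z).
        { apply Hb. apply perp_single. rewrite <- H1. apply kle_antisym; lat. }
        rewrite <- H2. apply kle_antisym; lat.
    + intros S HS HM.
      set (T := fun x : L => S (F x)).
      assert (HT : small K T).
      { unfold small in *. eapply (lt_card_inj _ _ K (fun p : {x : L | T x} => exist S (F (proj1_sig p)) (proj2_sig p))); [|exact HS].
        intros [x hx] [y hy] E. simpl in E. apply (f_equal (@proj1_sig _ _)) in E. simpl in E.
        apply F_inj in E; auto. subst. f_equal. apply proof_irrelevance. }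
      destruct (kjoin_ex L (S:=T) HT) as [u Hu]. exists u. apply Bext. intro x.
      change (Cl (fun w => w = u) x <-> Cl (fun x => exists P, S P /\ proj1_sig P x) x).
      apply cl_congr. intro y. rewrite perp_single.
      assert (Hd := kdistr L y HT Hu).
      split.
      * intros E w [P [HP Hw]]. destruct (HM P HP) as [v Hv]. subst P.
        assert (Hyv : m y v = z).
        { eapply zle; [|exact E]. apply (proj1 Hd). exists v. split; auto. }
        rewrite mcomm. apply Hw. apply perp_single; auto.
      * intro H. apply lez. apply (proj2 Hd). intros s [v [Hv ->]].
        rewrite (H v); [apply kle_refl|]. exists (F v). split; [exact Hv|]. apply cl_ext; auto.
  - intro b. exists (fun P => exists x, proj1_sig b x /\ P = F x). split.
    + intros s [x [_ ->]]; eauto.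
    + apply Bext. intro x.
      change (proj1_sig b x <-> Cl (fun x => exists P, (exists x0, proj1_sig b x0 /\ P = F x0) /\ proj1_sig P x) x).
      transitivity (Cl (proj1_sig b) x).
      { split. apply cl_ext. destruct b as [B hB]; apply hB. }
      apply cl_congr. intro y. split.
      * intros H w [P [[v [Hv ->]] Hw]]. rewrite mcomm. apply Hw. apply perp_single. apply H; auto.
      * intros H w Hw. apply H. exists (F w). split. eauto. apply cl_ext; auto.
  - intro a; eauto.
  - intros y Hy; exact Hy.
  - intros a b; apply (F_order D).
Qed.
End Main.

Section Rev.
Variables (K : Type) (hK : regular_card K) (L : KFrame K).
Local Notation le := (kle L).
Local Notation m := (kmeet L).
Local Notation z := (kbot L).

Lemma bool_to_d : boolean_repr L -> d_reduced L.
Proof.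
  intros [B [M [f [[Htop [Hmeet Hjoin]] [Hgen [HM [Hsurj Hord]]]]]]].
  assert (bml : forall a b : B, ble B (bmeet B a b) a).
  { intros a b. apply (proj1 (bmeet_glb B a b _) (ble_refl B _)). }
  assert (bmr : forall a b : B, ble B (bmeet B a b) b).
  { intros a b. apply (proj1 (bmeet_glb B a b _) (ble_refl B _)). }
  assert (fmeet : forall a x, f (m a x) = bmeet B (f a) (f x)).
  { intros a x. destruct (Hsurj _ (Hmeet _ _ (HM a) (HM x))) as [w Hw].
    assert (E : w = m a x).
    { apply kle_antisym.
      - apply mi; apply Hord; rewrite Hw; auto.
      - apply Hord. rewrite Hw. apply bmeet_glb. split; apply Hord; [apply ml|apply mr]. }
    subst; auto. }
  assert (fbot : f z = bbot B).
  { assert (Hb : bjoin B (fun _ => False) = bbot B).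
    { apply ble_antisym. apply (proj2 (bjoin_lub B _)). intros s []. apply bbot_min. }
    destruct (Hsurj _ (Hjoin _ (small_empty K B hK) (fun s f => match f with end))) as [w Hw].
    rewrite Hb in Hw.
    assert (w = z).
    { apply lez. apply Hord. rewrite Hw. apply bbot_min. }
    subst; auto. }
  assert (one : forall a b, Drel L a b -> le a b).
  { intros a b Hd. apply Hord.
    destruct (bcompl B (f b)) as [c [Hc1 Hc2]].
    destruct (Hgen c) as [S [HS Hc]].
    assert (Ha0 : forall x, S (f x) -> m a x = z).
    { intros x Hx. apply Hd. apply lez. apply Hord. rewrite fbot, fmeet, <- Hc1.
      apply bmeet_glb. split. apply bml. eapply ble_trans; [apply bmr|].
      rewrite Hc. apply (proj1 (bjoin_lub B S)); auto. }
    assert (Hac : ble B (bmeet B (f a) c) (bbot B)).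
    { rewrite Hc, bdistr. apply (proj2 (bjoin_lub B _)).
      intros y [s [Hs ->]]. destruct (Hsurj s (HS s Hs)) as [x <-].
      rewrite <- fmeet, Ha0, fbot; auto. apply ble_refl. }
    assert (E : f a = bmeet B (f a) (btop B)).
    { apply ble_antisym. apply bmeet_glb; split; [apply ble_refl|apply btop_max]. apply bml. }
    rewrite E, <- Hc2, bdistr. apply (proj2 (bjoin_lub B _)).
    intros y [s [[-> | ->] ->]]. apply bmr.
    eapply ble_trans; [exact Hac| apply bbot_min]. }
  intros a b H. apply kle_antisym; apply one; auto.
  intro x; split; apply H.
Qed.
End Rev.

Theorem mainTheorem14 (K : Type) (hK : regular_card K) (L : KFrame K) :
  (d_reduced L <-> g_injective L) /\ (g_injective L <-> boolean_repr L).
Proof.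
  split; split; intro H.
  - apply (d_to_g K hK); auto.
  - apply (g_to_d K hK); auto.
  - apply d_to_bool. apply (g_to_d K hK); auto.
  - apply (d_to_g K hK). apply (bool_to_d K hK); auto.
Qed.
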